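(* Let $\mathcal{H}\subseteq\{0,1\}^{\mathcal{X}}$ be a concept class over an arbitrary domain $\mathcal{X}$ and let $m\in\mathbb{N}$. Then $\omega_m\le\omega^\star_m\le 2^m$, where $\omega_m$ and $\omega^\star_m$ are the clique number and fractional clique number of the contradiction graph $G_m(\mathcal{H})$.
   Context: For $m\in\mathbb{N}$, a dataset of size $m$ is a sequence $S=((x_1,y_1),\dots,(x_m,y_m))\in(\mathcal{X}\times\{0,1\})^m$; a hypothesis $h\in\{0,1\}^{\mathcal{X}}$ is consistent with $S$ if $h(x_i)=y_i$ for all $i$; $S$ is $\mathcal{H}$-realizable if some $h\in\mathcal{H}$ is consistent with $S$. We write $(x,y)\in S$ if $(x,y)=(x_i,y_i)$ for some $i$. Let $V_m(\mathcal{H})$ be the set of $\mathcal{H}$-realizable datasets of size $m$. The contradiction graph of order $m$, $G_m(\mathcal{H})$, is the undirected graph with vertex set $V_m(\mathcal{H})$ in which two datasets $S,S'$ are adjacent iff there is $x\in\mathcal{X}$ with $(x,0)\in S$ and $(x,1)\in S'$. $\omega_m$ is the clique number of $G_m(\mathcal{H})$ (supremum of sizes of cliques). A fractional clique of a graph $G=(V,E)$ is a function $\delta:V\to[0,\infty)$ with $\sum_{v\in I}\delta(v)\le 1$ for every independent set $I$ of $G$; its size is $|\delta|=\sum_{v\in V}\delta(v)$; the fractional clique number $\omega^\star(G)$ is the supremum of the sizes of fractional cliques, and $\omega^\star_m:=\omega^\star(G_m(\mathcal{H}))$. *)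

(* Defs.v *)
From mathcomp Require Import all_boot all_order all_algebra.
From mathcomp Require Import all_classical all_reals.
From mathcomp Require Import ereal esum.

Set Implicit Arguments. Unset Strict Implicit. Unset Printing Implicit Defensive.
Import Order.TTheory GRing.Theory Num.Theory.
Local Open Scope classical_set_scope.
Local Open Scope ring_scope.

Definition dataset (X : Type) (m : nat) : choiceType := {classic ('I_m -> X * bool)}.

Definition in_dataset (X : Type) (m : nat) (p : X * bool) (S : dataset X m) : Prop :=
  exists i : 'I_m, S i = p.

Definition consistent (X : Type) (m : nat) (h : X -> bool) (S : dataset X m) : Prop :=
  forall i : 'I_m, h (S i).1 = (S i).2.

Definition realizable (X : Type) (H : set (X -> bool)) (m : nat) (S : dataset X m) : Prop :=
  exists2 h, H h & consistent h S.

Definition Vm (X : Type) (H : set (X -> bool)) (m : nat) : set (dataset X m) :=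
  [set S | realizable H S].

Definition contra (X : Type) (m : nat) (S S' : dataset X m) : Prop :=
  exists x : X, in_dataset (x, false) S /\ in_dataset (x, true) S'.

Definition adjacent (X : Type) (m : nat) (S S' : dataset X m) : Prop :=
  contra S S' \/ contra S' S.

Definition is_clique (X : Type) (H : set (X -> bool)) (m n : nat)
  (f : 'I_n -> dataset X m) : Prop :=
  injective f /\ (forall i, @Vm X H m (f i)) /\
  (forall i j, i <> j -> adjacent (f i) (f j)).

Definition clique_number {R : realType} (X : Type) (H : set (X -> bool)) (m : nat)
  : \bar R :=
  ereal_sup [set (n%:R)%:E | n in [set n : nat | exists f, @is_clique X H m n f]].

Definition independent (X : Type) (H : set (X -> bool)) (m : nat)
  (I : set (dataset X m)) : Prop :=
  I `<=` @Vm X H m /\ (forall S S', I S -> I S' -> S <> S' -> ~ adjacent S S').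

(* fractional clique: delta : V -> [0, oo) (values off V are irrelevant and
   ignored: all sums range over subsets of V) *)
Definition frac_clique {R : realType} (X : Type) (H : set (X -> bool)) (m : nat)
  (delta : dataset X m -> R) : Prop :=
  (forall S, @Vm X H m S -> 0 <= delta S) /\
  (forall I, independent H I -> (\esum_(S in I) (delta S)%:E <= 1)%E).

Definition frac_size {R : realType} (X : Type) (H : set (X -> bool)) (m : nat)
  (delta : dataset X m -> R) : \bar R :=
  \esum_(S in @Vm X H m) (delta S)%:E.

Definition frac_clique_number {R : realType} (X : Type) (H : set (X -> bool)) (m : nat)
  : \bar R :=
  ereal_sup [set frac_size H delta | delta in [set d | @frac_clique R X H m d]].

(* Main.v *)
Require Import Defs.
From mathcomp Require Import all_boot all_order all_algebra.
From mathcomp Require Import all_classical all_reals.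
From mathcomp Require Import ereal esum.
Import Order.TTheory GRing.Theory Num.Theory.
Local Open Scope classical_set_scope.
Local Open Scope ring_scope.
Set Implicit Arguments. Unset Strict Implicit.

Section Count.
Variables (R : realType) (X : Type) (H : set (X -> bool)) (m : nat).
Local Notation T := (dataset X m).

Lemma key (s : seq T) (d : T -> R) :
  (forall S, S \in s -> realizable H S) ->
  (forall S, S \in s -> 0 <= d S) ->
  (forall g : X -> bool, \sum_(S <- s | `[< consistent g S >]) d S <= 1) ->
  \sum_(S <- s) d S <= (2 ^ m)%:R.
Proof.
move=> Sreal d0 gle.
pose xs (S : T) : seq {classic X} := [seq ((S i).1 : {classic X}) | i <- enum 'I_m].
pose D := undup (flatten (map xs s)).
pose Tt : finType := seq_sub D.
pose ext (g : {ffun Tt -> bool}) (x : X) : bool :=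
  if (insub (x : {classic X}) : option Tt) is Some y then g y else false.
pose A (S : T) := [pred g : {ffun Tt -> bool} | `[< consistent (ext g) S >] ].
have cnt : forall S, S \in s -> (2 ^ #|Tt| <= 2 ^ m * #|A S|)%N.
  move=> S Ss; case: (Sreal S Ss) => h _ hS.
  pose F (y : Tt) : pred bool := if val y \in xs S then pred1 (h (val y)) else predT.
  have sub : {subset family F <= A S}.
    move=> g /familyP gF.
    suff: consistent (ext g) S by move=> c; rewrite inE.
    move=> i.
    have xD : ((S i).1 : {classic X}) \in D.
      rewrite mem_undup; apply/flattenP; exists (xs S); first exact: map_f.
      by apply/mapP; exists i; rewrite ?mem_enum.
    rewrite /ext insubT /= -hS.
    have := gF (SeqSub xD); rewrite /F /= ifT; first by move/eqP.
    by apply/mapP; exists i; rewrite ?mem_enum.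
  have cF : (#|family F| = 2 ^ #|[pred y : Tt | val y \notin xs S]|)%N.
    rewrite card_family foldrE big_map big_enum /=.
    rewrite (bigID (fun y : Tt => val y \in xs S)) /= big1 ?mul1n; last first.
      by move=> y yin; rewrite /F yin card1.
    rewrite (eq_bigr (fun _ => 2%N)); last first.
      by move=> y /negbTE yn; rewrite /F yn card_bool.
    by rewrite prod_nat_const.
  pose P := [pred y : Tt | val y \in xs S].
  have cP : (#|P| <= m)%N.
    have -> : #|P| = size (map val (enum P)) by rewrite size_map cardE.
    rewrite -[m](size_enum_ord m) -(size_map (fun i => ((S i).1 : {classic X}))).
    apply: uniq_leq_size; first by rewrite (map_inj_uniq val_inj) enum_uniq.
    by move=> x /mapP [y]; rewrite mem_enum => yP ->.
  rewrite -(cardC P) expnD.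
  apply: leq_mul; first by rewrite leq_pexp2l.
  rewrite (@eq_card _ _ [pred y : Tt | val y \notin xs S]) // -cF.
  by apply: subset_leq_card; apply/fintype.subsetP.
have sumg : \sum_(g : {ffun Tt -> bool}) \sum_(S <- s | `[< consistent (ext g) S >]) d S
    <= (2 ^ #|Tt|)%:R.
  apply: le_trans (_ : \sum_(g : {ffun Tt -> bool}) 1 <= _).
    by apply: ler_sum => g _; exact: gle.
  by rewrite sumr_const card_ffun card_bool.
have eqs : \sum_(S <- s) d S * #|A S|%:R
    = \sum_(g : {ffun Tt -> bool}) \sum_(S <- s | `[< consistent (ext g) S >]) d S.
  rewrite [RHS](eq_bigr (fun g => \sum_(S <- s) (if `[< consistent (ext g) S >] then d S else 0))); last first.
    by move=> g _; rewrite big_mkcond.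
  rewrite exchange_big /=; apply: eq_bigr => S _.
  rewrite mulr_natr -sumr_const big_mkcond /=.
  by apply: eq_bigr => g _; rewrite inE.
have h : (2 ^ #|Tt|)%:R * \sum_(S <- s) d S <= (2 ^ m)%:R * (2 ^ #|Tt|)%:R :> R.
  rewrite mulr_sumr.
  apply: le_trans (_ : \sum_(S <- s) (2 ^ m)%:R * (d S * #|A S|%:R) <= _).
    rewrite big_seq_cond [X in _ <= X]big_seq_cond; apply: ler_sum => S /andP[Ss _].
    rewrite mulrCA -natrM mulrC; apply: ler_wpM2l; first exact: d0.
    by rewrite ler_nat; exact: cnt.
  by rewrite -mulr_sumr eqs; apply: ler_wpM2l => //; exact: sumg.
by rewrite [X in _ <= X]mulrC ler_pM2l ?ltr0n ?expn_gt0 in h.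
Qed.
End Count.

Lemma part2 (R : realType) (X : Type) (H : set (X -> bool)) (m : nat) :
  (@frac_clique_number R X H m <= ((2 ^ m)%N%:R)%:E)%E.
Proof.
rewrite /frac_clique_number; apply: ge_ereal_sup => _ [d [d0 dI] <-].
rewrite /frac_size /esum; apply: ge_ereal_sup => _ [B [finB BV] <-].
rewrite fsbig_finite //= sumEFin lee_fin.
apply: (key (H := H)).
- by move=> S; rewrite in_fset_set // inE => /BV.
- by move=> S; rewrite in_fset_set // inE => /BV /d0.
move=> g.
pose J := [set S : dataset X m | consistent g S].
have ind : independent H (B `&` J).
  split; first by move=> S [/BV].
  move=> S S' [_ cS] [_ cS'] _ [] [x [[i ei] [j ej]]].
    by have := cS i; have := cS' j; rewrite ei ej /= => ->.
  by have := cS' i; have := cS j; rewrite ei ej /= => ->.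
have := dI _ ind; rewrite esum_fset; last 2 first.
- exact: finite_setIl.
- by move=> S; rewrite inE => -[/BV /d0].
rewrite fsbig_mkcondr fsbig_finite // => h.
rewrite -lee_fin -sumEFin; apply: le_trans h; rewrite big_mkcond /=.
rewrite le_eqVlt; apply/orP; left; apply/eqP; apply: eq_bigr => S _.
by [].
Qed.


Lemma part1 (R : realType) (X : Type) (H : set (X -> bool)) (m : nat) :
  (@clique_number R X H m <= frac_clique_number H m)%E.
Proof.
rewrite /clique_number; apply: ge_ereal_sup => _ [n [f [finj [fV fadj]]] <-].
pose d (S : dataset X m) : R := if `[< exists i, f i = S >] then 1 else 0.
have d0 S : 0 <= d S by rewrite /d; case: ifP.
have dout S : ~ range f S -> d S = 0.
  by move=> nr; rewrite /d; case: asboolP => // -[i e]; exfalso; apply: nr; exists i.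
have din i : d (f i) = 1 by rewrite /d; case: asboolP => // nex; exfalso; apply: nex; exists i.
apply: ereal_sup_ubound; exists d.
  split; first by move=> S _; exact: d0.
  move=> I [IV Iind].
  rewrite (esumID (range f)); last by move=> S _; rewrite lee_fin.
  rewrite [X in (_ + X)%E]esum1 ?adde0; last by move=> S [_ /dout ->].
  case: (pselect (exists S, (I `&` range f) S)) => [[S0 [IS0 [i _ e]]] | no].
    have -> : I `&` range f = [set S0].
      apply/seteqP; split => S; last by move=> ->; split => //; exists i.
      move=> [IS [j _ ej]] /=.
      case: (eqVneq S S0) => // ne; exfalso.
      apply: (Iind S S0) => //; first by move=> ee; rewrite ee eqxx in ne.
      rewrite -ej -e; apply: fadj => ij; move: ne; by rewrite -ej -e ij eqxx.
    by rewrite esum_set1 ?lee_fin // -e din.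
  have -> : I `&` range f = set0 by apply/seteqP; split => // S IS; apply: no; exists S.
  by rewrite esum_set0.
rewrite /frac_size (esumID (range f)); last by move=> S _; rewrite lee_fin.
rewrite [X in (_ + X)%E]esum1 ?adde0; last by move=> S [_ /dout ->].
rewrite setIidr; last by move=> S [i _ <-]; exact: fV.
rewrite esum_image; last by move=> i j _ _ /finj.
rewrite (eq_esum (b := fun=> 1%E)); last by move=> i _; rewrite din.
rewrite esum_fset; last 2 first.
- exact: finite_finset.
- by move=> i _; rewrite lee_fin.
rewrite (fsbig_fwiden (enum 'I_n)) ?enum_uniq //; last first.
  by move=> i [] /=; rewrite mem_enum.
  by move=> i _ /=; rewrite mem_enum.
by rewrite sumEFin big_enum /= sumr_const card_ord.
Qed.

Theorem mainTheorem1 (R : realType) (X : Type) (H : set (X -> bool)) (m : nat) :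
  (@clique_number R X H m <= frac_clique_number H m)%E /\
  (@frac_clique_number R X H m <= ((2 ^ m)%N%:R)%:E)%E.
Proof. by split; [exact: part1 | exact: part2]. Qed.
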